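(* Under the hypotheses and notation below, write the monic eigenfunction as $p_\lambda=\sum_{\ell=1}^n c_{\lambda\lambda^{(\ell)}}m_{\lambda^{(\ell)}}$. Then $c_{\lambda\lambda^{(n)}}=c_{\lambda\lambda}=1$ and, for $1<\ell\le n$, $$c_{\lambda\lambda^{(\ell-1)}}=\frac{1}{\epsilon_\lambda-\epsilon_{\lambda^{(\ell-1)}}}\sum_{k=\ell}^n c_{\lambda\lambda^{(k)}}\,d_{\lambda^{(k)}\lambda^{(\ell-1)}}.$$
   Context: Setting: $E$ real Euclidean space spanned by an irreducible root system $R$, Weyl group $W$, positive roots $R^+$, $\mathcal{Q}^+=\mathrm{Span}_{\mathbb{N}}(R^+)$, weight lattice $\mathcal{P}$, dominant weights $\mathcal{P}^+$, partial order $\lambda\succeq\mu$ iff $\lambda-\mu\in\mathcal{Q}^+$. $\mathcal{A}^W$ is the space of $W$-invariants in the group algebra of $\mathcal{P}$ (formal exponentials $e^\lambda$, $e^\lambda e^\mu=e^{\lambda+\mu}$), with basis $m_\lambda=\sum_{\mu\in W(\lambda)}e^\mu$, $\lambda\in\mathcal{P}^+$; $\mathcal{A}^W_\lambda=\mathrm{Span}\{m_\mu\mid\mu\in\mathcal{P}^+,\mu\preceq\lambda\}$. $D:\mathcal{A}^W\to\mathcal{A}^W$ is linear with $D(\mathcal{A}^W_\lambda)\subseteq\mathcal{A}^W_\lambda$ for all $\lambda\in\mathcal{P}^+$; $\{s_\lambda\}$ is a basis with $m_\lambda=\sum_{\mu\preceq\lambda}a_{\lambda\mu}s_\mu$, $a_{\lambda\lambda}=1$,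 and $Dm_\lambda=\sum_{\mu\preceq\lambda}b_{\lambda\mu}s_\mu$, $b_{\lambda\lambda}=\epsilon_\lambda$ (sums over dominant $\mu$); $D$ is regular: $\epsilon_\mu\ne\epsilon_\lambda$ whenever $\mu\prec\lambda$ are dominant. $p_\lambda$ is the unique element of $\mathcal{A}^W$ with $Dp_\lambda=\epsilon_\lambda p_\lambda$ and $p_\lambda=m_\lambda+\sum_{\mu\in\mathcal{P}^+,\mu\prec\lambda}c_{\lambda\mu}m_\mu$. For fixed $\lambda\in\mathcal{P}^+$, $\lambda^{(1)},\dots,\lambda^{(n)}=\lambda$ is an enumeration of $\{\mu\in\mathcal{P}^+\mid\mu\preceq\lambda\}$ such that $\lambda^{(i)}\prec\lambda^{(j)}$ implies $i<j$, and $d_{\lambda^{(j)}\lambda^{(k)}}=b_{\lambda^{(j)}\lambda^{(k)}}-\epsilon_\lambda a_{\lambda^{(j)}\lambda^{(k)}}$ for $j>k$. *)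

(* Defs.v *)
From HB Require Import structures.
From mathcomp Require Import all_boot all_order all_algebra.
From mathcomp Require Import boolp reals.
Set Implicit Arguments. Unset Strict Implicit. Unset Printing Implicit Defensive.
Import Order.TTheory GRing.Theory Num.Theory.
Local Open Scope ring_scope.

Section RootData.
Variables (R : realType) (r : nat).
Local Notation vec := 'rV[R]_r.

Definition dotp (u v : vec) : R := (u *m v^T) 0 0.

Definition copair (x a : vec) : R := 2 * dotp x a / dotp a a.

Definition refl (a x : vec) : vec := x - copair x a *: a.

Definition is_intR (x : R) : Prop := exists z : int, x = z%:~R.

Definition irreducible_root_system (Phi : seq vec) : Prop :=
  [/\ (0 : vec) \notin Phi,
      (forall x : vec, exists c : vec -> R, x = \sum_(a <- Phi) c a *: a),
      (forall a b, a \in Phi -> b \in Phi -> refl a b \in Phi),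
      (forall a b, a \in Phi -> b \in Phi -> is_intR (copair b a)) &
      (forall S : pred vec, (exists2 a, a \in Phi & S a) ->
          (exists2 a, a \in Phi & ~~ S a) ->
          exists a b, [/\ a \in Phi, b \in Phi, S a, ~~ S b & dotp a b != 0])].

Definition regular_vec (Phi : seq vec) (v0 : vec) : Prop :=
  forall a, a \in Phi -> dotp a v0 != 0.

Definition posroot (v0 a : vec) : bool := 0 < dotp a v0.

(* Weyl group elements as words in the simple reflections s_a, a in Phi *)
Definition weyl_act (w : seq vec) (x : vec) : vec := foldr refl x w.

Definition in_orbit (Phi : seq vec) (la x : vec) : Prop :=
  exists2 w : seq vec, all (mem Phi) w & x = weyl_act w la.

Definition weight (Phi : seq vec) (x : vec) : Prop :=
  forall a, a \in Phi -> is_intR (copair x a).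

Definition dominant (Phi : seq vec) (v0 x : vec) : Prop :=
  weight Phi x /\ (forall a, a \in Phi -> posroot v0 a -> 0 <= copair x a).

Definition in_Qplus (Phi : seq vec) (v0 x : vec) : Prop :=
  exists c : vec -> nat, x = \sum_(a <- Phi | posroot v0 a) (c a)%:R *: a.

Definition preceq (Phi : seq vec) (v0 mu la : vec) : Prop :=
  in_Qplus Phi v0 (la - mu).
Definition prec (Phi : seq vec) (v0 mu la : vec) : Prop :=
  preceq Phi v0 mu la /\ mu <> la.

Variable K : fieldType.

(* Elements of the group algebra of P are finitely supported functions
   f : E -> K supported in P (f x = coefficient of e^x). *)
Definition in_groupalg (Phi : seq vec) (f : vec -> K) : Prop :=
  exists s : seq vec, forall x, f x != 0 -> x \in s /\ weight Phi x.

Definition W_invariant (Phi : seq vec) (f : vec -> K) : Prop :=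
  forall (w : seq vec) x, all (mem Phi) w -> f (weyl_act w x) = f x.

Definition in_AW (Phi : seq vec) (f : vec -> K) : Prop :=
  in_groupalg Phi f /\ W_invariant Phi f.

(* m_la = sum_{mu in W(la)} e^mu *)
Definition mono (Phi : seq vec) (la : vec) : vec -> K :=
  fun x => if `[< in_orbit Phi la x >] then 1 else 0.

Definition in_AWle (Phi : seq vec) (v0 la : vec) (f : vec -> K) : Prop :=
  exists (t : seq vec) (c : vec -> K),
    (forall mu, mu \in t -> dominant Phi v0 mu /\ preceq Phi v0 mu la) /\
    (forall x, f x = \sum_(mu <- t) c mu * mono Phi mu x).

Definition triangular_operator (Phi : seq vec) (v0 : vec)
    (D : (vec -> K) -> (vec -> K)) : Prop :=
  [/\ (forall f, in_AW Phi f -> in_AW Phi (D f)),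
      (forall f g (k : K), in_AW Phi f -> in_AW Phi g ->
         forall x, D (fun y => k * f y + g y) x = k * D f x + D g x) &
      (forall la f, dominant Phi v0 la -> in_AWle Phi v0 la f ->
         in_AWle Phi v0 la (D f))].

Definition dominant_basis (Phi : seq vec) (v0 : vec) (s : vec -> vec -> K) : Prop :=
  [/\ (forall la, dominant Phi v0 la -> in_AW Phi (s la)),
      (forall (t : seq vec) (c : vec -> K), uniq t ->
         (forall mu, mu \in t -> dominant Phi v0 mu) ->
         (forall x, \sum_(mu <- t) c mu * s mu x = 0) ->
         forall mu, mu \in t -> c mu = 0) &
      (forall f, in_AW Phi f -> exists (t : seq vec) (c : vec -> K),
         (forall mu, mu \in t -> dominant Phi v0 mu) /\
         (forall x, f x = \sum_(mu <- t) c mu * s mu x))].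

Definition lower_expansion (Phi : seq vec) (v0 : vec) (s : vec -> vec -> K)
    (la : vec) (g : vec -> K) (e : vec -> vec -> K) : Prop :=
  (exists t : seq vec, [/\ uniq t,
     (forall mu, mu \in t <-> dominant Phi v0 mu /\ preceq Phi v0 mu la) &
     (forall x, g x = \sum_(mu <- t) e la mu * s mu x)]) /\
  (forall mu, ~ (dominant Phi v0 mu /\ preceq Phi v0 mu la) -> e la mu = 0).

End RootData.

(* Main.v *)
Require Import Defs.
From HB Require Import structures.
From mathcomp Require Import all_boot all_order all_algebra.
From mathcomp Require Import boolp reals.
From mathcomp Require Import zify ring.
Import Order.TTheory GRing.Theory Num.Theory.
Local Open Scope ring_scope.

Section Helpers.
Variables (R : realType) (r : nat) (K : fieldType).
Local Notation vec := 'rV[R]_r.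
Variables (Phi : seq vec) (v0 : vec).

Lemma AW0 : in_AW Phi (fun _ : vec => (0:K)).
Proof. split; last by []. by exists [::] => x; rewrite eqxx. Qed.

Lemma AW_lin (f g : vec -> K) k : in_AW Phi f -> in_AW Phi g ->
  in_AW Phi (fun y => k * f y + g y).
Proof.
move=> [[s1 H1] W1] [[s2 H2] W2]; split.
  exists (s1 ++ s2) => x nz.
  have [fx|fx] := eqVneq (f x) 0.
    have [gx|gx] := eqVneq (g x) 0.
      by move: nz; rewrite fx gx mulr0 addr0 eqxx.
    by have [h1 h2] := H2 x gx; rewrite mem_cat h1 orbT.
  by have [h1 h2] := H1 x fx; rewrite mem_cat h1.
by move=> w x hw; rewrite W1 ?W2.
Qed.

Lemma AW_sum (I : eqType) (idx : seq I) (k : I -> K) (F : I -> vec -> K) :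
  (forall i, i \in idx -> in_AW Phi (F i)) ->
  in_AW Phi (fun y => \sum_(i <- idx) k i * F i y).
Proof.
elim: idx => [|i idx IH] H.
  have -> : (fun y => \sum_(i <- [::]) k i * F i y) = fun _ => 0.
    by apply: funext => y; rewrite big_nil.
  exact: AW0.
have -> : (fun y => \sum_(j <- i :: idx) k j * F j y) =
   (fun y => k i * F i y + \sum_(j <- idx) k j * F j y).
  by apply: funext => y; rewrite big_cons.
apply: AW_lin; first by apply: H; rewrite mem_head.
by apply: IH => j hj; apply: H; rewrite in_cons hj orbT.
Qed.

Variable D : (vec -> K) -> (vec -> K).
Hypothesis Dlin : forall f g (k : K), in_AW Phi f -> in_AW Phi g ->
         forall x, D (fun y => k * f y + g y) x = k * D f x + D g x.

Lemma D0 x : D (fun _ => 0) x = 0.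
Proof.
have h := Dlin (fun _ => 0) (fun _ => 0) 1 AW0 AW0 x.
have e : (fun y : vec => 1 * (0:K) + 0) = (fun _ => 0).
  by apply: funext => y; rewrite mul1r addr0.
rewrite e mul1r in h.
have := congr1 (fun z => z - D (fun _ => 0) x) h.
by rewrite /= subrr addrK => <-.
Qed.

Lemma D_sum (I : eqType) (idx : seq I) (k : I -> K) (F : I -> vec -> K) x :
  (forall i, i \in idx -> in_AW Phi (F i)) ->
  D (fun y => \sum_(i <- idx) k i * F i y) x = \sum_(i <- idx) k i * D (F i) x.
Proof.
elim: idx => [|i idx IH] H.
  have -> : (fun y => \sum_(i <- [::]) k i * F i y) = fun _ => 0.
    by apply: funext => y; rewrite big_nil.
  by rewrite D0 big_nil.
have -> : (fun y => \sum_(j <- i :: idx) k j * F j y) =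
   (fun y => k i * F i y + \sum_(j <- idx) k j * F j y).
  by apply: funext => y; rewrite big_cons.
have H1 : in_AW Phi (F i) by apply: H; rewrite mem_head.
have H2 : forall j, j \in idx -> in_AW Phi (F j).
  by move=> j hj; apply: H; rewrite in_cons hj orbT.
by rewrite Dlin // ?big_cons ?IH //; apply: AW_sum.
Qed.

End Helpers.

Lemma sum_ext (T : eqType) (K : fieldType) (U t : seq T) (f : T -> K) :
  uniq t -> uniq U -> {subset t <= U} ->
  (forall nu, nu \in U -> nu \notin t -> f nu = 0) ->
  \sum_(nu <- t) f nu = \sum_(nu <- U) f nu.
Proof.
move=> ut uU sub z.
rewrite [RHS](bigID (mem t)) /= [X in _ = _ + X]big1_seq ?addr0; last first.
  by move=> i /andP[hi hU]; apply: z.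
rewrite -[in RHS]big_filter; apply: perm_big; apply: uniq_perm => //.
  exact: filter_uniq.
by move=> x; rewrite mem_filter; case: (boolP (x \in t)) => // /sub ->.
Qed.

Lemma preceq_trans (R : realType) (r : nat) (Phi : seq 'rV[R]_r) v0 x y z :
  preceq Phi v0 x y -> preceq Phi v0 y z -> preceq Phi v0 x z.
Proof.
move=> [c1 h1] [c2 h2]; exists (fun a => c1 a + c2 a)%N.
have -> : z - x = (z - y) + (y - x) by rewrite addrA subrK.
rewrite h1 h2 -big_split /=; apply: eq_bigr => a _.
by rewrite natrD scalerDl addrC.
Qed.

Theorem mainTheorem2 (R : realType) (r : nat) (K : fieldType)
    (Phi : seq 'rV[R]_r) (v0 : 'rV[R]_r)
    (D : ('rV[R]_r -> K) -> ('rV[R]_r -> K))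
    (s : 'rV[R]_r -> 'rV[R]_r -> K)
    (a b : 'rV[R]_r -> 'rV[R]_r -> K) (eps : 'rV[R]_r -> K)
    (la : 'rV[R]_r) (n : nat) (lam : nat -> 'rV[R]_r)
    (c : 'rV[R]_r -> 'rV[R]_r -> K) (p : 'rV[R]_r -> 'rV[R]_r -> K) :
  irreducible_root_system Phi ->
  regular_vec Phi v0 ->
  triangular_operator Phi v0 D ->
  dominant_basis Phi v0 s ->
  (* m_mu = sum_{nu <= mu} a_{mu nu} s_nu, a_{mu mu} = 1 *)
  (forall mu, dominant Phi v0 mu ->
     lower_expansion Phi v0 s mu (mono K Phi mu) a /\ a mu mu = 1) ->
  (* D m_mu = sum_{nu <= mu} b_{mu nu} s_nu, b_{mu mu} = eps_mu *)
  (forall mu, dominant Phi v0 mu ->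
     lower_expansion Phi v0 s mu (D (mono K Phi mu)) b /\ b mu mu = eps mu) ->
  (* D is regular *)
  (forall mu nu, dominant Phi v0 mu -> dominant Phi v0 nu ->
     prec Phi v0 mu nu -> eps mu != eps nu) ->
  dominant Phi v0 la ->
  (* lam 1, ..., lam n enumerates {mu in P^+ | mu <= la}, compatibly with < *)
  (forall i j, (1 <= i <= n)%N -> (1 <= j <= n)%N -> lam i = lam j -> i = j) ->
  (forall mu, (dominant Phi v0 mu /\ preceq Phi v0 mu la) <->
     exists2 i, (1 <= i <= n)%N & mu = lam i) ->
  (forall i j, (1 <= i <= n)%N -> (1 <= j <= n)%N ->
     prec Phi v0 (lam i) (lam j) -> (i < j)%N) ->
  lam n = la ->
  (* p_la is the monic eigenfunction: D p_la = eps_la p_la and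
     p_la = sum_{l=1}^n c_{la lam_l} m_{lam_l} with c_{la la} = 1 *)
  (forall x, D (p la) x = eps la * p la x) ->
  c la la = 1 ->
  (forall x, p la x = \sum_(1 <= l < n.+1) c la (lam l) * mono K Phi (lam l) x) ->
  let d := fun mu nu => b mu nu - eps la * a mu nu in
  c la (lam n) = 1 /\
  (forall l, (1 < l <= n)%N ->
     c la (lam l.-1) =
       (eps la - eps (lam l.-1))^-1 *
         \sum_(l <= k < n.+1) c la (lam k) * d (lam k) (lam l.-1)).
Proof.
move=> _ _ [DAW Dlin Dtri] [sAW sind sspan] Ha Hb Hreg Hla Hinj Henum Hord Hn
  Heig Hc1 Hp d.
split; first by rewrite Hn.
set T := [seq lam i | i <- iota 1 n].
have memT : forall nu, nu \in T <-> dominant Phi v0 nu /\ preceq Phi v0 nu la.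
  move=> nu; split.
    move/mapP=> [i]; rewrite mem_iota => hi ->; apply/Henum; exists i => //; lia.
  move/Henum => [i hi ->]; apply/mapP; exists i => //; rewrite mem_iota; lia.
have uT : uniq T.
  rewrite map_inj_in_uniq ?iota_uniq // => i j; rewrite !mem_iota => hi hj.
  apply: Hinj; lia.
have laml : forall l, (1 <= l <= n)%N ->
    dominant Phi v0 (lam l) /\ preceq Phi v0 (lam l) la.
  by move=> l hl; apply/Henum; exists l.
have expT : forall l, (1 <= l <= n)%N -> forall e g,
    lower_expansion Phi v0 s (lam l) g e ->
    forall x, g x = \sum_(nu <- T) e (lam l) nu * s nu x.
  move=> l hl e g [[t [ut memt eqg]] zero] x; rewrite eqg.
  apply: sum_ext => //.
    move=> nu /memt [dnu pnu]; apply/memT; split => //.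
    exact: preceq_trans pnu (laml l hl).2.
  move=> nu _ hnu; rewrite zero ?mul0r // => h.
  by move: hnu; rewrite (proj2 (memt nu) h).
have AWm : forall mu, dominant Phi v0 mu -> in_AW Phi (mono K Phi mu).
  move=> mu dmu; have [[[t [ut memt eqg]] _] _] := Ha mu dmu.
  have -> : mono K Phi mu = fun y => \sum_(nu <- t) a mu nu * s nu y.
    exact: funext.
  by apply: AW_sum => nu /memt [h _]; apply: sAW.
have main : forall x, \sum_(nu <- T)
   (\sum_(1 <= l < n.+1) c la (lam l) * d (lam l) nu) * s nu x = 0.
  move=> x; have h := Heig x.
  have pf : p la = fun y => \sum_(1 <= l < n.+1) c la (lam l) * mono K Phi (lam l) y.
    exact: funext.
  rewrite pf (@D_sum _ _ _ _ _ Dlin) in h; last first.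
    by move=> l; rewrite mem_index_iota => hl; apply: AWm; apply: (laml l _).1; lia.
  have h1 : \sum_(1 <= l < n.+1) c la (lam l) * D (mono K Phi (lam l)) x =
      \sum_(1 <= l < n.+1) c la (lam l) * \sum_(nu <- T) b (lam l) nu * s nu x.
    apply: eq_big_seq => l; rewrite mem_index_iota => hl.
    have hl' : (1 <= l <= n)%N by lia.
    by rewrite (expT l hl' b _ (Hb _ (laml l hl').1).1 x).
  have h2 : \sum_(1 <= l < n.+1) c la (lam l) * mono K Phi (lam l) x =
      \sum_(1 <= l < n.+1) c la (lam l) * \sum_(nu <- T) a (lam l) nu * s nu x.
    apply: eq_big_seq => l; rewrite mem_index_iota => hl.
    have hl' : (1 <= l <= n)%N by lia.
    by rewrite (expT l hl' a _ (Ha _ (laml l hl').1).1 x).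
  rewrite h1 h2 in h; have /eqP h0 : (_ - _ == 0) := ltac:(rewrite subr_eq0; apply/eqP; exact: h).
  rewrite -[RHS]h0.
  under eq_bigr => nu _ do rewrite mulr_suml.
  rewrite exchange_big /= mulr_sumr -sumrB; apply: eq_bigr => l _.
  rewrite !mulr_sumr -sumrB; apply: eq_bigr => nu _; rewrite /d; ring.
have coef : forall nu, nu \in T ->
    \sum_(1 <= l < n.+1) c la (lam l) * d (lam l) nu = 0.
  apply: (sind T _ uT) => //; first by move=> nu /memT [].
move=> l hl.
have hl1 : (1 <= l.-1 <= n)%N by lia.
set mu := lam l.-1.
have dmu : dominant Phi v0 mu by exact: (laml _ hl1).1.
have hne : eps la - eps mu != 0.
  rewrite subr_eq0 eq_sym; apply: Hreg => //; split; first exact: (laml _ hl1).2.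
  rewrite -Hn => e; have := Hinj l.-1 n hl1 ltac:(lia) e; lia.
have := coef mu; rewrite memT => /(_ (laml _ hl1)).
rewrite (big_cat_nat _ (n:=l.-1)) /=; try lia.
rewrite [\sum_(l.-1 <= i < n.+1) _]big_ltn; last by lia.
rewrite big_nat big1; last first.
  move=> k /andP[hk1 hk2]; rewrite /d.
  have hk' : (1 <= k <= n)%N by lia.
  have hk : (k < l.-1)%N by [].
  clear hk1 hk2.
  have nprec : ~ (dominant Phi v0 mu /\ preceq Phi v0 mu (lam k)).
    move=> [_ hp]; have [e|ne] := eqVneq mu (lam k).
      by move: (Hinj _ _ hl1 hk' e); lia.
    by have := Hord _ _ hl1 hk' (conj hp (elimN eqP ne)); lia.
  have dk := (laml _ hk').1.
  by rewrite ((Ha _ dk).1.2 _ nprec) ((Hb _ dk).1.2 _ nprec) mulr0 subrr mulr0.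
rewrite /d (Ha _ dmu).2 (Hb _ dmu).2 add0r.
have -> : l.-1.+1 = l by lia.
set S := \sum_(l <= i < n.+1) _.
move=> h.
have hS : S = c la mu * (eps la - eps mu).
  by apply/eqP; rewrite -subr_eq0 -h; apply/eqP; ring.
by rewrite hS mulrC mulrK // unitfE.
Qed.
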